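(* A linear operator $T:\mathbb C[z]\to\mathbb C[z]$ preserves stability (i.e. $T(\mathcal H_1(\mathbb C))\subseteq\mathcal H_1(\mathbb C)\cup\{0\}$) if and only if either (a) $T$ has range of dimension at most one and $T(f)=\alpha(f)P$ for $f\in\mathbb C[z]$, where $\alpha:\mathbb C[z]\to\mathbb C$ is a linear functional and $P\in\mathcal H_1(\mathbb C)$; or (b) $T[(z+w)^n]\in\mathcal H_2(\mathbb C)\cup\{0\}$ for all $n\in\mathbb N$.
   Context: A polynomial $f\in\mathbb C[z_1,\dots,z_k]$ is stable if it is non-zero and $f(z_1,\dots,z_k)\neq0$ whenever $\Im z_j>0$ for all $j$; $\mathcal H_k(\mathbb C)$ is the set of stable polynomials in $k$ variables. $T$ is extended to polynomials in $z,w$ by $T(z^kw^\ell)=T(z^k)w^\ell$. *)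

(* Defs.v *)
From HB Require Import structures.
From mathcomp Require Import all_boot all_order all_algebra.
From mathcomp Require Import reals.
From mathcomp Require Import complex.
Set Implicit Arguments. Unset Strict Implicit. Unset Printing Implicit Defensive.
Import Order.TTheory GRing.Theory Num.Theory.
Local Open Scope ring_scope.

Definition stable1 (R : realType) (f : {poly R[i]}) : Prop :=
  f != 0 /\ forall z : R[i], 0 < complex.Im z -> f.[z] != 0.

(* Bivariate polynomials in z, w are represented as {poly {poly C}}:
   outer variable w, coefficients polynomials in z.  p(z,w) = (p.[w%:P]).[z]. *)
Definition eval2 (R : realType) (p : {poly {poly R[i]}}) (z w : R[i]) : R[i] :=
  (p.[w%:P]).[z].

Definition stable2 (R : realType) (p : {poly {poly R[i]}}) : Prop :=
  p != 0 /\ forall z w : R[i], 0 < complex.Im z -> 0 < complex.Im w ->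
    eval2 p z w != 0.

Definition zw_pow (R : realType) (n : nat) : {poly {poly R[i]}} :=
  (('X)%:P + 'X) ^+ n.

(* Extension of T to C[z,w]: T(z^k w^l) = T(z^k) w^l, i.e. T acts on the
   z-polynomial coefficients of each power of w. *)
Definition extT (R : realType) (T : {poly R[i]} -> {poly R[i]})
  (p : {poly {poly R[i]}}) : {poly {poly R[i]}} := map_poly T p.

(* Main.v *)
Require Import Defs.
From HB Require Import structures.
From mathcomp Require Import all_boot all_order all_algebra.
From mathcomp Require Import reals.
From mathcomp Require Import complex.
From mathcomp Require Import ring lra.
From Stdlib Require Import Classical.
Import Order.TTheory GRing.Theory Num.Theory.
Local Open Scope ring_scope.


Section Basic.
Variable R : realType.
Local Notation C := R[i].
Local Notation Re := complex.Re.
Local Notation Im := complex.Im.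

Lemma ReD (x y : C) : Re (x + y) = Re x + Re y. Proof. by case: x => ? ?; case: y => ? ?. Qed.
Lemma ImD (x y : C) : Im (x + y) = Im x + Im y. Proof. by case: x => ? ?; case: y => ? ?. Qed.
Lemma ReN (x : C) : Re (- x) = - Re x. Proof. by case: x. Qed.
Lemma ImN (x : C) : Im (- x) = - Im x. Proof. by case: x. Qed.
Lemma ReB (x y : C) : Re (x - y) = Re x - Re y. Proof. by rewrite ReD ReN. Qed.
Lemma ImB (x y : C) : Im (x - y) = Im x - Im y. Proof. by rewrite ImD ImN. Qed.
Lemma ReM (x y : C) : Re (x * y) = Re x * Re y - Im x * Im y. Proof. by case: x => ? ?; case: y => ? ?. Qed.
Lemma ImM (x y : C) : Im (x * y) = Re x * Im y + Im x * Re y. Proof. by case: x => ? ?; case: y => ? ?. Qed.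
Lemma Re1 : Re (1 : C) = 1. Proof. by []. Qed.
Lemma Im1 : Im (1 : C) = 0. Proof. by []. Qed.
Lemma Re0 : Re (0 : C) = 0. Proof. by []. Qed.
Lemma Im0 : Im (0 : C) = 0. Proof. by []. Qed.
Lemma Imnat n : Im (n%:R : C) = 0.
Proof. elim: n => // n IH; by rewrite -addn1 natrD ImD IH Im1 addr0. Qed.
Lemma Renat n : Re (n%:R : C) = n%:R.
Proof. elim: n => // n IH; by rewrite -addn1 !natrD ReD IH Re1. Qed.
Lemma eqC (x y : C) : Re x = Re y -> Im x = Im y -> x = y.
Proof. by case: x; case: y => ? ? ? ? /= -> ->. Qed.

Lemma real_step (a k zr zi xr xi : R) : 0 < a -> 0 <= k ->
  a * (zr^+2 + zi^+2) + zi <= 0 -> a * (xr^+2 + xi^+2) + k * xi <= 0 ->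
  a * ((zr + xr)^+2 + (zi + xi)^+2) + (k + 1) * (zi + xi) <= 0.
Proof.
move=> a0 k0 hz hx.
have [k0e|kp] := eqVneq k 0.
  subst k.
  rewrite mul0r addr0 in hx.
  have hs : xr^+2 + xi^+2 <= 0 by rewrite -(pmulr_rle0 _ a0).
  have h1 := sqr_ge0 xr; have h2 := sqr_ge0 xi.
  have /eqP : xr^+2 = 0 by lra.
  have /eqP : xi^+2 = 0 by lra.
  rewrite !sqrf_eq0 => /eqP -> /eqP ->.
  by rewrite !addr0 add0r mul1r.
have kpos : 0 < k by rewrite lt_def kp k0.
have h2 : 0 <= a * ((k * zr - xr)^+2 + (k * zi - xi)^+2).
  by rewrite mulr_ge0 ?addr_ge0 ?sqr_ge0 // ltW.
have h3 : k * (k + 1) * (a * (zr^+2 + zi^+2) + zi) <= 0.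
  by rewrite pmulr_rle0 // mulr_gt0 // ltr_wpDl.
have h4 : (k + 1) * (a * (xr^+2 + xi^+2) + k * xi) <= 0.
  by rewrite pmulr_rle0 // ltr_wpDl.
rewrite -(pmulr_rle0 _ kpos).
have -> : k * (a * ((zr + xr) ^+ 2 + (zi + xi) ^+ 2) + (k + 1) * (zi + xi)) =
  k * (k + 1) * (a * (zr^+2 + zi^+2) + zi) + (k + 1) * (a * (xr^+2 + xi^+2) + k * xi)
  - a * ((k * zr - xr)^+2 + (k * zi - xi)^+2) by ring.
lra.
Qed.

Lemma zeta_bound (a ur ui zr zi : R) : 0 < a -> a <= ui ->
  zr * ur - zi * ui = 1 -> zr * ui + zi * ur = 0 ->
  a * (zr^+2 + zi^+2) + zi <= 0 /\ zi < 0.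
Proof.
move=> a0 aui h1 h2.
have ui0 : 0 < ui by apply: (lt_le_trans a0 aui).
have N0 : 0 < ur^+2 + ui^+2 by rewrite ltr_wpDl ?sqr_ge0 // exprn_gt0.
have e1 : (ur^+2 + ui^+2) * zi = - ui.
  have -> : (ur^+2 + ui^+2) * zi = ur * (zr * ui + zi * ur) - ui * (zr * ur - zi * ui) by ring.
  by rewrite h1 h2; ring.
have e2 : (ur^+2 + ui^+2) * (zr^+2 + zi^+2) = 1.
  have -> : (ur^+2 + ui^+2) * (zr^+2 + zi^+2) = (zr * ur - zi * ui)^+2 + (zr * ui + zi * ur)^+2 by ring.
  by rewrite h1 h2; ring.
split.
  rewrite -(pmulr_rle0 _ N0) mulrDr mulrCA e2 e1; lra.
by rewrite -(pmulr_rlt0 _ N0) e1 oppr_lt0.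
Qed.

Lemma laguerre_real (a b n k vr vi xr xi : R) : 0 < a -> 0 < b -> vi = b - a ->
  0 < n -> 0 <= k -> k <= n -> xi <= 0 -> a * (xr^+2 + xi^+2) + k * xi <= 0 ->
  vr * xr - vi * xi = - n -> vr * xi + vi * xr = 0 -> False.
Proof.
move=> a0 b0 hv n0 k0 kn xi0 hx h1 h2.
have hx2 : a * (xr^+2 + xi^+2) + n * xi <= 0.
  have : (n - k) * xi <= 0 by rewrite mulr_ge0_le0 // subr_ge0.
  lra.
have e1 : (vr^+2 + vi^+2) * xi = n * vi.
  have -> : (vr^+2 + vi^+2) * xi = vr * (vr * xi + vi * xr) - vi * (vr * xr - vi * xi) by ring.
  by rewrite h1 h2; ring.
have e2 : (vr^+2 + vi^+2) * (xr^+2 + xi^+2) = n^+2.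
  have -> : (vr^+2 + vi^+2) * (xr^+2 + xi^+2) = (vr * xr - vi * xi)^+2 + (vr * xi + vi * xr)^+2 by ring.
  by rewrite h1 h2; ring.
have N0 : 0 <= vr^+2 + vi^+2 by rewrite addr_ge0 ?sqr_ge0.
have : (vr^+2 + vi^+2) * (a * (xr^+2 + xi^+2) + n * xi) <= 0.
  by rewrite mulr_ge0_le0.
have -> : (vr^+2 + vi^+2) * (a * (xr^+2 + xi^+2) + n * xi) =
   a * ((vr^+2 + vi^+2) * (xr^+2 + xi^+2)) + n * ((vr^+2 + vi^+2) * xi) by ring.
rewrite e1 e2 hv.
have : 0 < n^+2 * b by rewrite mulr_gt0 // exprn_gt0.
have -> : a * n ^+ 2 + n * (n * (b - a)) = n^+2 * b by ring.
lra.
Qed.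

Definition NV (p : {poly C}) := forall z : C, 0 < Im z -> p.[z] != 0.

Lemma prod_inv [rs : seq C] [w : C] : 0 < Im w -> all (fun r => Im r <= 0) rs ->
  (\prod_(r <- rs) ('X - r%:P)).[w] != 0 /\ exists x,
   (\prod_(r <- rs) ('X - r%:P))^`().[w] = x * (\prod_(r <- rs) ('X - r%:P)).[w] /\
   Im w * (Re x ^+ 2 + Im x ^+ 2) + (size rs)%:R * Im x <= 0 /\ Im x <= 0 /\
   (rs != [::] -> Im x < 0).
Proof.
move=> wpos; elim: rs => [|r rs IH] /=.
  move=> _; rewrite big_nil hornerC oner_eq0; split => //.
  exists 0; rewrite -polyC1 derivC horner0 mul0r; split => //.
  by rewrite Re0 Im0 expr0n /= addr0 !mulr0 addr0.
move=> /andP [hr hall]; have [pw [x [hx [hb [hxi hneg]]]]] := IH hall.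
rewrite big_cons; set q := \prod_(_ <- _) _ in pw hx hb *.
set u := w - r.
have uI : Im w <= Im u by rewrite /u ImB; lra.
have u0 : u != 0 by apply/eqP => u0; move: uI; rewrite u0 Im0; lra.
have hpw : (('X - r%:P) * q).[w] = u * q.[w] by rewrite hornerM hornerXsubC.
split; first by rewrite hpw mulf_neq0.
exists (u^-1 + x); split.
  rewrite derivM derivXsubC mul1r hornerD hornerM hornerXsubC hx hpw -/u.
  by field.
have hz : u^-1 * u = 1 by rewrite mulVf.
have hre : Re (u^-1) * Re u - Im (u^-1) * Im u = 1 by rewrite -ReM hz.
have him : Re (u^-1) * Im u + Im (u^-1) * Re u = 0 by rewrite -ImM hz.
have [zb zneg] := zeta_bound _ _ _ _ _ wpos uI hre him.
have hs := real_step _ _ _ _ _ _ wpos (ler0n _ _) zb hb.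
have -> : ((size rs).+1%:R : R) = (size rs)%:R + 1 by rewrite -addn1 natrD.
rewrite ReD ImD; split => //.
split; first lra.
move=> _; lra.
Qed.

Lemma NV_neq0 [p] : NV p -> p != 0.
Proof.
move=> hp; apply/eqP => p0; have := hp (Complex 0 1) ltr01.
by rewrite p0 horner0 eqxx.
Qed.

Lemma NV_factor [p : {poly C}] : NV p ->
  exists rs, [/\ p = lead_coef p *: \prod_(r <- rs) ('X - r%:P),
     all (fun r => Im r <= 0) rs & size rs = (size p).-1].
Proof.
move=> hp; have [rs hrs] := closed_field_poly_normal p.
have lc0 : lead_coef p != 0 by rewrite lead_coef_eq0 (NV_neq0 hp).
exists rs; split => //.
  apply/allP => r rin; rewrite leNgt; apply/negP => hr.
  have := hp r hr; rewrite hrs hornerZ horner_prod (big_rem r rin) /=.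
  by rewrite hornerXsubC subrr mul0r mulr0 eqxx.
by rewrite hrs size_scale // size_prod_XsubC.
Qed.

Lemma laguerre (p : {poly C}) (n : nat) (w' : C) : (0 < n)%N -> (size p <= n.+1)%N ->
  0 < Im w' -> NV p -> NV (n%:R *: p + (w'%:P - 'X) * p^`()).
Proof.
move=> n0 sp w'0 hp w w0.
have [rs [hrs hall hsz]] := NV_factor hp.
set c := lead_coef p in hrs; set q := \prod_(_ <- _) _ in hrs.
have c0 : c != 0 by rewrite lead_coef_eq0 (NV_neq0 hp).
have [qw [x [hx [hb [hxi _]]]]] := prod_inv w0 hall.
rewrite -/q in qw hx hb.
rewrite hrs derivZ hornerD hornerZ hornerM hornerZ.
rewrite hornerZ hx hornerD hornerC hornerN hornerX.
have -> : n%:R * (c * q.[w]) + (w' - w) * (c * (x * q.[w])) =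
   c * q.[w] * (n%:R + (w' - w) * x) by ring.
rewrite !mulf_neq0 //; apply/eqP => h.
have hv : (w' - w) * x = - n%:R by apply/eqP; rewrite -subr_eq0 opprK addrC h.
have hre : Re (w' - w) * Re x - Im (w' - w) * Im x = - n%:R.
  by rewrite -ReM hv ReN Renat.
have him : Re (w' - w) * Im x + Im (w' - w) * Re x = 0.
  by rewrite -ImM hv ImN Imnat oppr0.
apply: (laguerre_real _ _ _ _ _ _ _ _ w0 w'0 (ImB _ _) _ (ler0n _ (size rs)) _ hxi hb hre him).
  by rewrite ltr0n.
by rewrite ler_nat hsz; move: sp; case: (size p) => //= m; rewrite ltnS.
Qed.

Lemma gauss_lucas (p : {poly C}) : NV p -> p^`() = 0 \/ NV p^`().
Proof.
move=> hp; have [rs [hrs hall hsz]] := NV_factor hp.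
have c0 : lead_coef p != 0 by rewrite lead_coef_eq0 (NV_neq0 hp).
case: rs hall hrs hsz => [|r rs] hall hrs hsz.
  by left; rewrite hrs big_nil derivZ -polyC1 derivC scaler0.
right => w w0.
have [qw [x [hx [_ [_ hneg]]]]] := prod_inv w0 hall.
rewrite hrs derivZ hornerZ hx !mulf_neq0 //.
by apply/eqP => x0; have := hneg isT; rewrite x0 Im0 ltxx.
Qed.
End Basic.

Arguments NV {R}.
Arguments NV_factor {R p}.
Arguments NV_neq0 {R p}.


Section Biv.
Variable R : realType.
Local Notation C := R[i].
Local Notation Re := complex.Re.
Local Notation Im := complex.Im.
Variable T : {linear {poly C} -> {poly C}}.

Lemma poly_vanish (q : {poly C}) : (forall w : C, 0 < Im w -> q.[w] = 0) -> q = 0.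
Proof.
move=> hq; apply/eqP; apply/negPn/negP => q0.
pose rs := mkseq (fun k => Complex (0:R) (k.+1)%:R) (size q).
have hall : all (root q) rs.
  apply/allP => x /mapP [k _ ->]; apply/rootP/hq => /=; by rewrite ltr0n.
have hu : uniq rs.
  rewrite map_inj_uniq ?iota_uniq // => a b [] /eqP; by rewrite eqr_nat => /eqP [].
have := max_poly_roots q0 hall hu.
by rewrite size_mkseq ltnn.
Qed.

Lemma extT_coef p i : (extT T p)`_i = T (p`_i).
Proof. by rewrite /extT coef_map_id0 // linear0. Qed.

Lemma extT_size p : (size (extT T p) <= size p)%N.
Proof. by rewrite /extT /map_poly size_poly. Qed.

Lemma extT_D p q : extT T (p + q) = extT T p + extT T q.
Proof. by apply/polyP => i; rewrite coefD !extT_coef coefD linearD. Qed.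

Lemma extT_Mn p n : extT T (p *+ n) = extT T p *+ n.
Proof. by apply/polyP => i; rewrite coefMn !extT_coef coefMn linearMn. Qed.

Lemma extT_N p : extT T (- p) = - extT T p.
Proof. by apply/polyP => i; rewrite coefN !extT_coef coefN linearN. Qed.

Lemma extT_X p : extT T ('X * p) = 'X * extT T p.
Proof.
apply/polyP => i; rewrite coefXM !extT_coef coefXM.
by case: (i == 0)%N => //; rewrite linear0.
Qed.

Lemma extT_CC (c : C) p : extT T (c%:P%:P * p) = c%:P%:P * extT T p.
Proof.
by apply/polyP => i; rewrite coefCM !extT_coef coefCM !mul_polyC linearZ.
Qed.

Lemma extT_C (q : {poly C}) : extT T q%:P = (T q)%:P.
Proof.
apply/polyP => i; rewrite extT_coef !coefC.
by case: (i == 0)%N => //; rewrite linear0.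
Qed.

Lemma extT_deriv p : (extT T p)^`() = extT T p^`().
Proof. by apply/polyP => i; rewrite coef_deriv !extT_coef coef_deriv linearMn. Qed.

Lemma extT_eval (p : {poly {poly C}}) (w : C) : (extT T p).[w%:P] = T (p.[w%:P]).
Proof.
rewrite (horner_coef_wide _ (extT_size p)) horner_coef linear_sum.
apply: eq_bigr => i _; rewrite extT_coef -rmorphXn /=.
by rewrite ![_ * _%:P]mulrC !mul_polyC linearZ.
Qed.


Definition Az (z : C) (p : {poly {poly C}}) : {poly C} := map_poly (horner_eval z) p.

Lemma eval2_A p z w : eval2 p z w = (Az z p).[w].
Proof.
have := horner_map (horner_eval z) p w%:P.
by rewrite /= horner_evalE hornerC /eval2 /Az => ->.
Qed.

Lemma Az_size z p : (size (Az z p) <= size p)%N.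
Proof. by rewrite /Az /map_poly size_poly. Qed.

Definition Qs (s : seq C) : {poly C} := \prod_(w <- s) ('X + w%:P).
Definition Bs s m : {poly {poly C}} := (Qs s)%:P * zw_pow R m.

Lemma zw_deriv m : (zw_pow R m.+1)^`() = zw_pow R m *+ m.+1.
Proof. by rewrite /zw_pow deriv_exp derivD derivC derivX add0r mul1r. Qed.

Lemma Bs_deriv s m : (Bs s m.+1)^`() = Bs s m *+ m.+1.
Proof. by rewrite /Bs derivM derivC mul0r add0r zw_deriv mulrnAr. Qed.

Lemma Bs_step w' s m : Bs (w'::s) m *+ m.+1 =
  Bs s m.+1 *+ m.+1 + ((w'%:P)%:P - 'X) * (Bs s m.+1)^`().
Proof.
rewrite Bs_deriv /Bs /Qs big_cons polyCM polyCD.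
move: (\prod_(_ <- _) _)%:P => Q.
rewrite /zw_pow exprS mulrnAr -mulrnDl; congr (_ *+ _); ring.
Qed.

Lemma zw_size m : (size (zw_pow R m) <= m.+1)%N.
Proof.
apply: leq_trans (size_poly_exp_leq _ _) _.
by rewrite addrC size_XaddC mul1n.
Qed.

Lemma Bs_size s m : (size (Bs s m) <= m.+1)%N.
Proof. by rewrite /Bs mul_polyC (leq_trans (size_scale_leq _ _)) ?zw_size. Qed.

Lemma A_step z w' s m : Az z (extT T (Bs (w'::s) m)) *+ m.+1 =
  Az z (extT T (Bs s m.+1)) *+ m.+1 + (w'%:P - 'X) * (Az z (extT T (Bs s m.+1)))^`().
Proof.
rewrite /Az -rmorphMn -extT_Mn Bs_step extT_D extT_Mn mulrBl extT_D extT_N extT_CC extT_X.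
rewrite rmorphD rmorphMn rmorphB !rmorphM /= map_polyC map_polyX /=.
by rewrite horner_evalE hornerC deriv_map extT_deriv mulrBl.
Qed.

Definition Good (F : {poly {poly C}}) := (forall z, 0 < Im z -> Az z F = 0) \/
  (forall z, 0 < Im z -> NV (Az z F)).

Lemma NV_Mn (q : {poly C}) n : NV (q *+ n) -> NV q.
Proof. by move=> h z hz; move: (h z hz); rewrite hornerMn; apply: contra => /eqP ->; rewrite mul0rn. Qed.

Lemma Mn_eq0 (q : {poly C}) n : q *+ n.+1 = 0 -> q = 0.
Proof.
rewrite -scaler_nat => /eqP; rewrite scaler_eq0 pnatr_eq0 /=.
by move/eqP.
Qed.

Lemma chain s : all (fun w => 0 < Im w) s -> forall m,
  Good (extT T (zw_pow R (size s + m))) -> Good (extT T (Bs s m)).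
Proof.
elim: s => [|w' s IH] /=.
  by move=> _ m; rewrite /Bs /Qs big_nil mul1r.
move=> /andP [hw hs] m hG.
rewrite addSnnS in hG; have [h0|hnv] := IH hs m.+1 hG.
  left => z hz; have := A_step z w' s m; rewrite h0 // deriv0 mulr0 addr0 mul0rn.
  exact: Mn_eq0.
right => z hz; apply: (@NV_Mn _ m.+1); rewrite A_step -scaler_nat.
apply: laguerre => //; last exact: (hnv z hz).
by apply: leq_trans (Az_size _ _) _; apply: leq_trans (extT_size _) _; apply: Bs_size.
Qed.

Lemma chain_end s : all (fun w => 0 < Im w) s ->
  Good (extT T (zw_pow R (size s))) -> T (Qs s) = 0 \/ NV (T (Qs s)).
Proof.
move=> hs hG; have := @chain s hs 0; rewrite addn0 => /(_ hG).
rewrite /Bs /zw_pow expr0 mulr1 extT_C /Good /Az => [[h|h]].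
  left; apply: poly_vanish => w hw; move: (h w hw).
  by rewrite map_polyC /= horner_evalE => /eqP; rewrite polyC_eq0 => /eqP.
right => w hw; have := h w hw (Complex 0 1) ltr01.
by rewrite map_polyC hornerC /= horner_evalE.
Qed.

Lemma Good_of n : stable2 (extT T (zw_pow R n)) \/ extT T (zw_pow R n) = 0 ->
  Good (extT T (zw_pow R n)).
Proof.
case=> [[_ h]|->].
  by right => z hz w hw; rewrite -eval2_A; apply: h.
by left => z _; rewrite /Az map_poly0.
Qed.

End Biv.

Arguments Az {R}.


Section Nrm.
Variable R : realType.
Local Notation C := R[i].
Local Notation Re := complex.Re.
Local Notation Im := complex.Im.

Definition nrm (x : C) : R := Num.sqrt (Re x ^+ 2 + Im x ^+ 2).
Local Notation rc := (real_complex R).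

Lemma normE (x : C) : `|x| = rc (nrm x).
Proof. exact: normc_def. Qed.

Lemma nrm_ge0 x : 0 <= nrm x. Proof. exact: sqrtr_ge0. Qed.

Lemma nrmM x y : nrm (x * y) = nrm x * nrm y.
Proof. have := normrM x y; rewrite !normE -rmorphM; exact: complexI. Qed.

Lemma nrmD x y : nrm (x + y) <= nrm x + nrm y.
Proof. by have := ler_normD x y; rewrite !normE -rmorphD lecR. Qed.

Lemma nrmN x : nrm (- x) = nrm x.
Proof. have := normrN x; rewrite !normE; exact: complexI. Qed.

Lemma nrmX x n : nrm (x ^+ n) = nrm x ^+ n.
Proof. have := normrX n x; rewrite !normE -rmorphXn; exact: complexI. Qed.

Lemma nrmMn x n : nrm (x *+ n) = nrm x * n%:R.
Proof. have := normrMn x n; rewrite !normE -rmorphMn mulr_natr; exact: complexI. Qed.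

Lemma nrm_eq0 x : nrm x = 0 -> x = 0.
Proof. by move=> h; apply/eqP; rewrite -normr_eq0 normE h. Qed.

Lemma nrm_Im x : Im x <= nrm x.
Proof.
rewrite /nrm; apply: le_trans (real_ler_norm _) _; first exact: num_real.
rewrite -sqrtr_sqr ler_sqrt ?addr_ge0 ?sqr_ge0 //.
by rewrite ler_wpDl ?sqr_ge0 // real_normK ?num_real.
Qed.

Lemma nrm_sum (J : nat) (F : nat -> C) :
  nrm (\sum_(j < J) F j) <= \sum_(j < J) nrm (F j).
Proof.
elim: J => [|J IH]; first by rewrite !big_ord0 /nrm /= expr0n /= addr0 sqrtr0.
by rewrite !big_ord_recr /=; apply: le_trans (nrmD _ _) _; rewrite lerD2r.
Qed.

Lemma nrm_iy (e : R) : 0 <= e -> nrm (Complex 0 e) = e.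
Proof. by move=> e0; rewrite /nrm /= expr0n /= add0r sqrtr_sqr ger0_norm. Qed.

Lemma nrm_gt0 x : x != 0 -> 0 < nrm x.
Proof. by move=> x0; rewrite lt_def nrm_ge0 andbT; apply: contra x0 => /eqP /nrm_eq0 ->. Qed.

Lemma limit_contra (J : nat) (a b : nat -> C) (K : R) : a 0%N = 0 -> b 0%N != 0 -> 0 <= K ->
  (forall e : R, 0 < e -> e <= 1 ->
    nrm (\sum_(j < J.+1) b j * (Complex 0 e) ^+ j) <=
      K * nrm (\sum_(j < J.+1) a j * (Complex 0 e) ^+ j)) -> False.
Proof.
move=> a0 b0 K0 hyp.
pose A := \sum_(j < J) nrm (a j.+1); pose B := \sum_(j < J) nrm (b j.+1).
have A0 : 0 <= A by rewrite sumr_ge0 // => j _; apply: nrm_ge0.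
have B0 : 0 <= B by rewrite sumr_ge0 // => j _; apply: nrm_ge0.
have tail (c : nat -> C) e : 0 <= e -> e <= 1 ->
    nrm (\sum_(j < J) c j.+1 * (Complex 0 e) ^+ j.+1) <= e * \sum_(j < J) nrm (c j.+1).
  move=> e0 e1; apply: le_trans (nrm_sum J (fun j => c j.+1 * (Complex 0 e) ^+ j.+1)) _; rewrite mulr_sumr; apply: ler_sum => j _.
  rewrite nrmM nrmX nrm_iy // mulrC exprS -mulrA ler_wpM2l //.
  rewrite -[X in _ <= X]mul1r ler_wpM2r ?nrm_ge0 // exprn_ile1 //.
have nb := nrm_gt0 _ b0.
pose X := 2 * (B + K * A + 1).
have X0 : 0 < X by rewrite mulr_gt0 // ltr_wpDl ?addr_ge0 ?mulr_ge0.
pose e := nrm (b 0%N) / (X + nrm (b 0%N)).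
have XnB : 0 < X + nrm (b 0%N) by rewrite addr_gt0.
have e0 : 0 < e by rewrite divr_gt0.
have e1 : e <= 1 by rewrite ler_pdivrMr // mul1r lerDr ltW.
have := hyp e e0 e1.
rewrite !big_ord_recl /= !expr0 !mulr1 a0 add0r.
have ha := tail a e (ltW e0) e1; have hb := tail b e (ltW e0) e1.
set SA := \sum_(_ < _) _ in ha *; set SB := \sum_(_ < _) _ in hb *.
have hb0 : nrm (b 0%N) <= nrm (b 0%N + SB) + nrm SB.
  by rewrite -[X in nrm X](addrK SB) (le_trans (nrmD _ _)) // nrmN.
move=> hK.
have key : nrm (b 0%N) <= e * (B + K * A).
  have : K * nrm SA <= K * (e * A) by rewrite ler_wpM2l.
  rewrite -/A -/B in ha hb; lra.
have : e * (X + nrm (b 0%N)) = nrm (b 0%N) by rewrite /e mulfVK // gt_eqF.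
rewrite /X; nra.
Qed.

End Nrm.



Arguments nrm {R}.


Section Bound.
Variable R : realType.
Local Notation C := R[i].
Local Notation Re := complex.Re.
Local Notation Im := complex.Im.

Lemma nrm0 : nrm (0 : C) = 0.
Proof. by rewrite /nrm /= expr0n /= addr0 sqrtr0. Qed.

Lemma real_bound_step (a b k j1 pj pj' p0 Mn : R) : 0 < b -> b <= a -> 0 <= j1 -> j1 <= k ->
  0 <= p0 -> 0 <= Mn -> pj <= Mn * p0 -> pj' <= Mn * p0 -> 0 <= pj -> 0 <= pj' ->
  a * pj + pj' * j1 <= (1 + k / b) * Mn * (a * p0).
Proof.
move=> b0 ba j0 jk p00 M0 h1 h2 q1 q2.
have a0 : 0 < a by apply: lt_le_trans ba.
have k0 : 0 <= k by apply: le_trans jk.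
have kb : k <= k / b * a.
  rewrite mulrAC ler_pdivlMr // ler_wpM2l //.
have t1 : a * pj <= a * (Mn * p0) by rewrite ler_wpM2l // ltW.
have t2 : pj' * j1 <= (Mn * p0) * (k / b * a).
  apply: le_trans (ler_wpM2r j0 h2) _; rewrite ler_wpM2l ?mulr_ge0 //.
  exact: le_trans jk kb.
have -> : (1 + k / b) * Mn * (a * p0) = a * (Mn * p0) + (Mn * p0) * (k / b * a) by ring.
by apply: lerD.
Qed.

Lemma derivn_XsubC (P : {poly C}) (r : C) j :
  (('X - r%:P) * P)^`(j.+1) = ('X - r%:P) * P^`(j.+1) + P^`(j) *+ j.+1.
Proof.
elim: j => [|j IH].
  by rewrite !derivn1 derivM derivXsubC mul1r derivn0 mulr1n addrC.
rewrite derivnS IH derivD derivM derivXsubC mul1r derivMn -!derivnS.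
by rewrite (mulrS _ j.+1) [P^`(j.+1) + _]addrC addrA.
Qed.

Lemma prod_bound (rs : seq C) (z0 : C) (k : nat) : 0 < Im z0 -> all (fun r => Im r <= 0) rs ->
  forall j, (j <= k)%N -> nrm ((\prod_(r <- rs) ('X - r%:P))^`(j).[z0]) <=
     (1 + k%:R / Im z0) ^+ size rs * nrm ((\prod_(r <- rs) ('X - r%:P)).[z0]).
Proof.
have M1 : 1 <= 1 + k%:R / Im z0 -> True by [].
move=> hz; elim: rs => [|r rs IH] /=.
  move=> _ [|j] _; rewrite big_nil expr0 mul1r ?derivn0 // -polyC1 derivnC /=.
  by rewrite horner0 nrm0 nrm_ge0.
move=> /andP [hr hall] j hj.
have Mge1 : 1 <= 1 + k%:R / Im z0 by rewrite lerDl divr_ge0 // ltW.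
rewrite big_cons; set P := \prod_(_ <- _) _ in IH *.
case: j hj => [|j] hj.
  by rewrite derivn0 ler_peMl ?nrm_ge0 // exprn_ege1.
rewrite derivn_XsubC hornerD hornerM hornerXsubC hornerMn.
apply: le_trans (nrmD _ _ _) _; rewrite nrmM nrmMn hornerM hornerXsubC nrmM exprS -mulrA.
have := real_bound_step (nrm (z0 - r)) (Im z0) k%:R (j.+1)%:R
   (nrm (P^`(j.+1)).[z0]) (nrm (P^`(j)).[z0]) (nrm P.[z0])
   ((1 + k%:R / Im z0) ^+ size rs) hz.
move=> H; rewrite mulrA; apply: H.
- by apply: le_trans (nrm_Im _ _); rewrite ImB; lra.
- exact: ler0n.
- by rewrite ler_nat.
- exact: nrm_ge0.
- by rewrite exprn_ge0 // (le_trans ler01).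
- by apply: IH.
- by apply: IH => //; apply: ltnW.
- exact: nrm_ge0.
- exact: nrm_ge0.
Qed.

Lemma NV_bound (q : {poly C}) (z0 : C) k : 0 < Im z0 -> (q = 0 \/ NV q) ->
  nrm ((q^`(k)).[z0]) <= (1 + k%:R / Im z0) ^+ (size q) * nrm (q.[z0]).
Proof.
move=> hz [->|hq].
  by rewrite derivn_poly0 ?size_poly0 // horner0 nrm0 mulr_ge0 ?nrm_ge0 // exprn_ge0 // addr_ge0 // divr_ge0 // ltW.
have [rs [hrs hall hsz]] := NV_factor hq.
have Mge1 : 1 <= 1 + k%:R / Im z0 by rewrite lerDl divr_ge0 // ltW.
rewrite hrs derivnZ !hornerZ !nrmM.
have := prod_bound _ _ _ hz hall k (leqnn k).
set P := \prod_(_ <- _) _ => hb.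
rewrite mulrCA ler_wpM2l ?nrm_ge0 //; apply: le_trans hb _.
by rewrite ler_wpM2r ?nrm_ge0 // ler_weXn2l // hsz -hrs leq_pred.
Qed.

Lemma lead_derivn (q : {poly C}) : q != 0 ->
  q^`((size q).-1) = (lead_coef q *+ ((size q).-1)`!)%:P.
Proof.
move=> q0; apply/polyP => i; rewrite coef_derivn coefC.
case: i => [|i] /=; first by rewrite addn0 ffactnn lead_coefE.
rewrite nth_default ?mul0rn //.
have sq : (0 < size q)%N by rewrite size_poly_gt0.
move: sq; case: (size q) => //= n _.
by rewrite addnS ltnS leq_addr.
Qed.

Lemma taylor_shift (f : {poly C}) (h : C) :
  f \Po ('X + h%:P) = \sum_(j < size f) h ^+ j *: f^`N(j).
Proof.
apply/eqP; rewrite -subr_eq0; apply/eqP; apply: poly_vanish => x _.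
rewrite hornerD hornerN horner_comp hornerD hornerX hornerC.
rewrite (nderiv_taylor _ (mulrC x h)) horner_sum.
rewrite -sumrB big1 // => j _; by rewrite hornerZ mulrC subrr.
Qed.

Lemma shift_prod (rs : seq C) (h : C) :
  (\prod_(r <- rs) ('X - r%:P)) \Po ('X + h%:P) = \prod_(r <- rs) ('X + (h - r)%:P).
Proof.
elim: rs => [|r rs IH]; first by rewrite !big_nil -polyC1 comp_polyC.
by rewrite !big_cons comp_polyM IH comp_polyB comp_polyX comp_polyC polyCB addrA.
Qed.

Lemma derivn_sumZ (J k : nat) (c : nat -> C) (P : nat -> {poly C}) :
  ((\sum_(j < J) c j *: P j)%R)^`(k) = \sum_(j < J) c j *: (P j)^`(k).
Proof.
elim: J => [|J IH]; first by rewrite !big_ord0 derivn_poly0 ?size_poly0.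
by rewrite !big_ord_recr /= derivnD IH derivnZ.
Qed.

Lemma size_sumZ (J : nat) (c : nat -> C) (P : nat -> {poly C}) :
  (size (\sum_(j < J) c j *: P j)%R <= \sum_(j < J) size (P j))%N.
Proof.
elim: J => [|J IH]; first by rewrite !big_ord0 size_poly0.
rewrite !big_ord_recr /=; apply: leq_trans (size_add _ _) _.
rewrite geq_max; apply/andP; split.
  by apply: leq_trans IH _; apply: leq_addr.
by apply: leq_trans (size_scale_leq _ _) _; apply: leq_addl.
Qed.

End Bound.


Section Suff.
Variable R : realType.
Local Notation C := R[i].
Local Notation Re := complex.Re.
Local Notation Im := complex.Im.
Variable T : {linear {poly C} -> {poly C}}.

Lemma suff_dir (hb : forall n, stable2 (extT T (zw_pow R n)) \/ extT T (zw_pow R n) = 0)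
  (f : {poly C}) : stable1 f -> stable1 (T f) \/ T f = 0.
Proof.
move=> [f0 hf].
have [Tf0|Tf0] := eqVneq (T f) 0; first by right.
left; split => // z0 hz0; apply/negP => /eqP hroot.
have [rs [hrs hall hsz]] := NV_factor (hf : NV f).
have c0 : lead_coef f != 0 by rewrite lead_coef_eq0.
have hshift : forall e : R, 0 < e -> T (f \Po ('X + (Complex 0 e)%:P)) = 0 \/
     NV (T (f \Po ('X + (Complex 0 e)%:P))).
  move=> e e0.
  have hs : all (fun w => 0 < Im w) (map (fun r => Complex 0 e - r) rs).
    rewrite all_map; apply/allP => r rin /=; have := allP hall r rin; rewrite /= ImB /=; lra.
  have := @chain_end R T _ hs (@Good_of R T _ (hb _)).
  rewrite /Qs big_map.
  have -> : f \Po ('X + (Complex 0 e)%:P) =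
      lead_coef f *: \prod_(r <- rs) ('X + (Complex 0 e - r)%:P).
    by rewrite {1}hrs comp_polyZ shift_prod.
  rewrite linearZ /=; case=> [->|hnv]; first by left; rewrite scaler0.
  by right => z hz; rewrite hornerZ mulf_neq0 // hnv.
set q0 := T f in Tf0 hroot.
set k := (size q0).-1.
pose M := 1 + k%:R / Im z0.
have Mge1 : 1 <= M by rewrite lerDl divr_ge0 // ltW.
pose D := \sum_(j < size f) size (T (f^`N(j))).
pose a := fun j => (T (f^`N(j))).[z0].
pose b := fun j => ((T (f^`N(j)))^`(k)).[z0].
have sf : size f = (size f).-1.+1 by rewrite prednK // size_poly_gt0.
apply: (@limit_contra R (size f).-1 a b (M ^+ D)).
- by rewrite /a nderivn0.
- rewrite /b nderivn0 -/q0 /k lead_derivn // hornerC.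
  by rewrite mulrn_eq0 negb_or lead_coef_eq0 Tf0 andbT -lt0n fact_gt0.
- by rewrite exprn_ge0 // (le_trans ler01).
move=> e e0 e1; set h := Complex 0 e.
have htay : T (f \Po ('X + h%:P)) = \sum_(j < size f) h ^+ j *: T (f^`N(j)).
  by rewrite taylor_shift linear_sum; apply: eq_bigr => j _; rewrite linearZ.
have E1 : \sum_(j < (size f).-1.+1) a j * h ^+ j = (T (f \Po ('X + h%:P))).[z0].
  by rewrite htay horner_sum -sf; apply: eq_bigr => j _; rewrite hornerZ mulrC.
have E2 : \sum_(j < (size f).-1.+1) b j * h ^+ j = ((T (f \Po ('X + h%:P)))^`(k)).[z0].
  rewrite htay (derivn_sumZ _ _ k (fun j => h ^+ j) (fun j => T (f^`N(j)))) horner_sum -sf.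
  by apply: eq_bigr => j _; rewrite hornerZ mulrC.
rewrite E1 E2.
apply: le_trans (@NV_bound R _ z0 k hz0 (hshift e e0)) _.
rewrite ler_wpM2r ?nrm_ge0 // ler_weXn2l // htay.
exact: (size_sumZ _ _ (fun j => h ^+ j) (fun j => T (f^`N(j)))).
Qed.

End Suff.


Section Nec1.
Variable R : realType.
Local Notation C := R[i].
Local Notation Re := complex.Re.
Local Notation Im := complex.Im.

Lemma stable_pow (w : C) n : 0 <= Im w -> stable1 (('X + w%:P) ^+ n).
Proof.
move=> hw; split.
  by apply: monic_neq0; apply: monic_exp; apply: monicXaddC.
move=> z hz; rewrite horner_exp hornerD hornerX hornerC expf_neq0 //.
by apply/eqP => h; move: (congr1 (@complex.Im R) h); rewrite ImD /=; lra.
Qed.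

Lemma horner_bound (g : {poly C}) (m : nat) (z : C) (L : R) : (size g <= m.+1)%N ->
  1 <= L -> nrm z <= L ->
  nrm g.[z] <= (\sum_(i < m.+1) nrm g`_i) * L ^+ m.
Proof.
move=> sg L1 zL; rewrite (horner_coef_wide _ sg) mulr_suml.
apply: le_trans (nrm_sum _ _ (fun i => g`_i * z ^+ i)) _.
apply: ler_sum => i _; rewrite nrmM nrmX ler_wpM2l ?nrm_ge0 //.
apply: le_trans (ler_weXn2l L1 (ltnSE (ltn_ord i))).
by rewrite lerXn2r // ?nnegrE ?nrm_ge0 // (le_trans ler01).
Qed.

Lemma perturb (g : {poly C}) (w0 : C) (m : nat) : 0 < Im w0 -> (size g <= m.+1)%N ->
  exists e : C, e != 0 /\ NV (('X + w0%:P) ^+ m + e *: g).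
Proof.
move=> hw sg.
pose b := Im w0; pose nw := nrm w0.
pose S := \sum_(i < m.+1) nrm g`_i.
have S0 : 0 <= S by rewrite sumr_ge0 // => i _; apply: nrm_ge0.
pose K := (1 + b + nw) / b.
have nw0 : 0 <= nw by apply: nrm_ge0.
have b0 : 0 < b := hw.
have K0 : 0 < K by rewrite divr_gt0 //; lra.
have Kb : K * b = 1 + b + nw by rewrite /K mulfVK // gt_eqF.
pose e := (S * K ^+ m + 1)^-1.
have SK0 : 0 <= S * K ^+ m by rewrite mulr_ge0 // exprn_ge0 // ltW.
have e0 : 0 < e by rewrite invr_gt0 ltr_wpDl.
exists (Complex e 0); split.
  by apply/eqP => /(congr1 (@complex.Re R)) /=; move/eqP; rewrite gt_eqF.
move=> z hz; rewrite hornerD hornerZ horner_exp hornerD hornerX hornerC.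
set u := z + w0.
have Iu : b < Im u by rewrite /u ImD /b; lra.
have U0 : b <= nrm u by apply: le_trans (nrm_Im _ _); apply: ltW.
have KU : 1 <= K * nrm u /\ nrm z <= K * nrm u.
  have e1 : K * nrm u - (1 + nrm u + nw) = (nrm u - b) * (1 + nw) / b.
    by rewrite /K; field; rewrite lt0r_neq0.
  have e2 : 0 <= (nrm u - b) * (1 + nw) / b.
    by rewrite divr_ge0 ?mulr_ge0 // ?subr_ge0 // ?addr_ge0 // ltW.
  have hz' : nrm z <= nrm u + nw.
    have -> : z = u + - w0 by rewrite /u addrK.
    by apply: le_trans (nrmD _ _ _) _; rewrite nrmN.
  have := nrm_ge0 _ u; split; lra.
have hg := horner_bound g m z (K * nrm u) sg (proj1 KU) (proj2 KU).
apply/eqP => h.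
have hu : nrm (u ^+ m) = nrm (Complex e 0 * g.[z]).
  by move/eqP: h; rewrite addr_eq0 => /eqP ->; rewrite nrmN.
have ne : nrm (Complex e 0) = e.
  by rewrite /nrm /= expr0n /= addr0 sqrtr_sqr ger0_norm // ltW.
rewrite nrmX nrmM ne in hu.
have Um : 0 < nrm u ^+ m by rewrite exprn_gt0 // (lt_le_trans b0 U0).
have : nrm u ^+ m <= e * (S * (K * nrm u) ^+ m) by rewrite hu ler_wpM2l // ltW.
have eS : e * (S * K ^+ m) = 1 - e.
  rewrite /e; field; rewrite lt0r_neq0 //; lra.
rewrite exprMn.
have -> : e * (S * (K ^+ m * nrm u ^+ m)) = (e * (S * K ^+ m)) * nrm u ^+ m by ring.
rewrite eS.
move: Um; set X := nrm u ^+ m => Um.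
nra.
Qed.

End Nec1.

Section Nec2.
Variable R : realType.
Local Notation C := R[i].
Local Notation Re := complex.Re.
Local Notation Im := complex.Im.
Variable T : {linear {poly C} -> {poly C}}.
Hypothesis Hp : forall f, stable1 f -> stable1 (T f) \/ T f = 0.

Lemma S1 (w0 : C) (m : nat) : 0 < Im w0 -> T (('X + w0%:P)^+m) = 0 ->
  forall g : {poly C}, (size g <= m.+1)%N -> stable1 (T g) \/ T g = 0.
Proof.
move=> hw h0 g sg.
have [e [e0 hnv]] := @perturb R g w0 m hw sg.
have st : stable1 (('X + w0%:P)^+m + e *: g) by split; [exact: NV_neq0 hnv | exact: hnv].
have := Hp _ st; rewrite linearD linearZ_LR h0 add0r.
case=> [[ne hv]|he].
  left; split; first by apply/eqP => hg; move: ne; rewrite hg scaler0 eqxx.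
  move=> z hz; have := hv z hz; rewrite hornerZ; apply: contra => /eqP ->.
  by rewrite mulr0.
by right; move/eqP: he; rewrite scaler_eq0 (negbTE e0) => /eqP.
Qed.

Lemma dep2 (m : nat) : (forall g : {poly C}, (size g <= m.+1)%N -> stable1 (T g) \/ T g = 0) ->
  forall g1 g2 : {poly C}, (size g1 <= m.+1)%N -> (size g2 <= m.+1)%N ->
  exists a b : C, (a != 0 \/ b != 0) /\ a *: T g1 + b *: T g2 = 0.
Proof.
move=> H g1 g2 s1 s2.
have [h2|h2] := eqVneq (T g2) 0.
  exists 0, 1; split; first by right; exact: oner_neq0.
  by rewrite h2 scaler0 scale0r addr0.
have st2 : stable1 (T g2) by case: (H g2 s2) => // h; rewrite h eqxx in h2.
pose i0 := Complex (0:R) 1.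
have hi0 : 0 < Im i0 by rewrite /= ltr01.
have v2 : (T g2).[i0] != 0 by apply: (proj2 st2).
pose lam := (T g1).[i0] / (T g2).[i0].
exists 1, (- lam); split; first by left; exact: oner_neq0.
have sg : (size (g1 - lam *: g2)%R <= m.+1)%N.
  apply: leq_trans (size_add _ _) _; rewrite geq_max s1 size_opp.
  exact: leq_trans (size_scale_leq _ _) s2.
have hv : (T (g1 - lam *: g2)).[i0] = 0.
  by rewrite linearB linearZ_LR hornerD hornerN hornerZ /lam mulfVK // subrr.
rewrite scale1r scaleNr -linearZ_LR -linearB.
case: (H _ sg) => // [[_ hnv]].
by have := hnv i0 hi0; rewrite hv eqxx.
Qed.

Lemma G_eval n w : (extT T (zw_pow R n)).[w%:P] = T (('X + w%:P)^+n).
Proof. by rewrite extT_eval /zw_pow horner_exp hornerD hornerC hornerX addrC. Qed.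

Lemma eval2_G n z w : eval2 (extT T (zw_pow R n)) z w = (T (('X + w%:P)^+n)).[z].
Proof. by rewrite /eval2 G_eval. Qed.

Lemma Az_G_deriv z m :
  (Az z (extT T (zw_pow R m.+1)))^`() = Az z (extT T (zw_pow R m)) *+ m.+1.
Proof. by rewrite /Az deriv_map extT_deriv zw_deriv extT_Mn rmorphMn. Qed.

Lemma biv_vanish (p : {poly {poly C}}) : (forall w, 0 < Im w -> p.[w%:P] = 0) -> p = 0.
Proof.
move=> hp; apply/polyP => i; rewrite coef0; apply: poly_vanish => z hz.
have hA : Az z p = 0.
  by apply: poly_vanish => w hw; rewrite -eval2_A /eval2 hp // horner0.
by have := congr1 (fun q : {poly C} => q`_i) hA; rewrite /Az coef_map /= horner_evalE coef0.
Qed.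

End Nec2.


Section Nec3.
Variable R : realType.
Local Notation C := R[i].
Local Notation Re := complex.Re.
Local Notation Im := complex.Im.
Variable T : {linear {poly C} -> {poly C}}.

Lemma mk_alpha (i : nat) (c : C) :
  {alpha : {linear {poly C} -> C^o} | forall f, alpha f = (T f)`_i * c}.
Proof.
pose fa (f : {poly C}) : C^o := (T f)`_i * c.
have lin : linear fa.
  by move=> k u v; rewrite /fa linearD linearZ_LR coefD coefZ mulrDl -mulrA.
pose flM := GRing.isLinear.Build _ _ _ _ fa lin.
pose fL : {linear _ -> _} := HB.pack fa flM.
by exists fL.
Qed.

Lemma nec_dir (Hp : forall f, stable1 f -> stable1 (T f) \/ T f = 0) :
  (exists (alpha : {linear {poly C} -> C^o}) (P : {poly C}),
       stable1 P /\ forall f, T f = alpha f *: P)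
  \/ (forall n : nat, stable2 (extT T (zw_pow R n)) \/ extT T (zw_pow R n) = 0).
Proof.
have [[g1 [g2 hind]]|nind] := classic (exists g1 g2 : {poly C},
    forall a b : C, a *: T g1 + b *: T g2 = 0 -> a = 0 /\ b = 0).
- right => n.
  pose N0 := maxn (size g1) (size g2).
  have hN : forall m, (N0 <= m)%N -> forall w, 0 < Im w -> T (('X + w%:P)^+m) != 0.
    move=> m hm w hw; apply/eqP => h0.
    have hS := @S1 R T Hp w m hw h0.
    have s1 : (size g1 <= m.+1)%N by apply: leq_trans (leq_maxl _ _) (leqW hm).
    have s2 : (size g2 <= m.+1)%N by apply: leq_trans (leq_maxr _ _) (leqW hm).
    have [a [b [hab hsum]]] := @dep2 R T m hS g1 g2 s1 s2.
    have [ha hb] := hind a b hsum.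
    by case: hab; rewrite ?ha ?hb eqxx.
  pose N := (N0 + n)%N.
  have hA : forall z, 0 < Im z -> forall d, (d <= N)%N ->
      Az z (extT T (zw_pow R (N - d))) = 0 \/ NV (Az z (extT T (zw_pow R (N - d)))).
    move=> z hz; elim=> [|d IH] hd.
      right => w hw; rewrite subn0 -eval2_A eval2_G.
      have := Hp _ (@stable_pow R w N (ltW hw)); case=> [[_ hv]|h0]; first exact: hv.
      by have := hN N (leq_addr _ _) w hw; rewrite h0 eqxx.
    have e : (N - d = (N - d.+1).+1)%N by rewrite subnSK.
    have := IH (ltnW hd); rewrite e; move: (N - d.+1)%N => m [h0|hnv].
      by left; apply: (@Mn_eq0 _ _ m); rewrite -Az_G_deriv h0 deriv0.
    case: (@gauss_lucas R _ hnv) => [h0|hnv'].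
      by left; apply: (@Mn_eq0 _ _ m); rewrite -Az_G_deriv.
    by right; apply: (@NV_Mn _ _ m.+1); rewrite -Az_G_deriv.
  have hn : forall z, 0 < Im z ->
      Az z (extT T (zw_pow R n)) = 0 \/ NV (Az z (extT T (zw_pow R n))).
    by move=> z hz; have := hA z hz N0 (leq_addr _ _); rewrite /N addKn.
  have [hall|hnall] := classic (forall z w : C, 0 < Im z -> 0 < Im w ->
      eval2 (extT T (zw_pow R n)) z w != 0).
    left; split => //; apply/eqP => h.
    have := hall (Complex 0 1) (Complex 0 1) ltr01 ltr01.
    by rewrite h /eval2 !horner0 eqxx.
  right; apply: biv_vanish => w hw; rewrite G_eval.
  have [z0 [w0 [hz0 [hw0 he]]]] : exists z0 w0 : C, 0 < Im z0 /\ 0 < Im w0 /\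
      eval2 (extT T (zw_pow R n)) z0 w0 = 0.
    apply: NNPP => hne; apply: hnall => z w' hz hw'; apply/eqP => he.
    by apply: hne; exists z, w'.
  have hAz0 : Az z0 (extT T (zw_pow R n)) = 0.
    case: (hn z0 hz0) => // hnv; move: (hnv w0 hw0).
    by rewrite -eval2_A he eqxx.
  case: (Hp _ (@stable_pow R w n (ltW hw))) => [[_ hv]|//].
  have := hv z0 hz0; rewrite -eval2_G eval2_A hAz0 horner0 eqxx.
  by [].
- left.
  have dep : forall g1 g2 : {poly C}, exists a b : C,
      (a != 0 \/ b != 0) /\ a *: T g1 + b *: T g2 = 0.
    move=> g1 g2; apply: NNPP => hne; apply: nind; exists g1, g2 => a b hab.
    split; apply: NNPP => hn; apply: hne; exists a, b; split => //.
      by left; apply/eqP.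
    by right; apply/eqP.
  have [h0|hk] := classic (forall k, T ('X^k) = 0).
    have [al hal] := mk_alpha 0 0.
    exists al, 1; split.
      by split; [exact: oner_neq0 | move=> z _; rewrite hornerC oner_neq0].
    move=> f; rewrite hal mulr0 scale0r -(coefK f) poly_def linear_sum big1 // => i _.
    by rewrite linearZ_LR h0 scaler0.
  have [k hk'] : exists k, T ('X^k) != 0.
    apply: NNPP => h; apply: hk => k; apply/eqP; apply: NNPP => h'.
    by apply: h; exists k; apply/negP.
  set P := T 'X^k in hk'.
  have stP : stable1 P.
    have : stable1 (('X + 0%:P) ^+ k : {poly C}) by apply: stable_pow.
    rewrite addr0 => /Hp; case=> // h; by rewrite /P h eqxx in hk'.
  have lc0 : P`_(size P).-1 != 0 by rewrite -lead_coefE lead_coef_eq0.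
  have [al hal] := mk_alpha (size P).-1 (P`_(size P).-1)^-1.
  exists al, P; split => // f.
  have [a [b [hab hsum]]] := dep f ('X^k).
  have a0 : a != 0.
    case: hab => // hb; apply/eqP => a0; move: hsum.
    rewrite a0 scale0r add0r => /eqP; rewrite scaler_eq0 (negbTE hb) /=.
    by rewrite (negbTE hk').
  have hTf : T f = (- b / a) *: P.
    apply: (scalerI a0); rewrite scalerA mulrCA mulfV // mulr1 scaleNr.
    by apply/eqP; rewrite -addr_eq0; apply/eqP.
  by rewrite hal hTf coefZ -mulrA mulfV // mulr1.
Qed.

End Nec3.

Theorem mainTheorem5 (R : realType) (T : {linear {poly R[i]} -> {poly R[i]}}) :
  (forall f : {poly R[i]}, stable1 f -> stable1 (T f) \/ T f = 0) <->
  (exists (alpha : {linear {poly R[i]} -> R[i]^o}) (P : {poly R[i]}),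
       stable1 P /\ forall f, T f = alpha f *: P)
  \/ (forall n : nat, stable2 (extT T (zw_pow R n)) \/ extT T (zw_pow R n) = 0).
Proof.
split; first exact: nec_dir.
case=> [[alpha [P [[P0 hP] hT]]]|hb] f hf.
  rewrite hT; have [->|a0] := eqVneq (alpha f) 0; first by right; rewrite scale0r.
  left; split; first by rewrite scaler_eq0 negb_or a0.
  by move=> z hz; rewrite hornerZ mulf_neq0 // hP.
exact: suff_dir hb f hf.
Qed.
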